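(* Let $1<p<\infty$ and define $f:\mathbb{R}^2\to\mathbb{R}$ by $$f(x,y)=|x+y|^p-|x|^p-yp|x|^{p-1}\operatorname{sign}(x).$$ Then: (a) there is a constant $\Lambda>2$ such that $f(x,2y)\ge\Lambda f(x,y)$ for all $x,y\in\mathbb{R}$; (b) there is a constant $T>0$ such that $f(x,2y)\le Tf(x,y)$ for all $x,y\in\mathbb{R}$; (c) there is a constant $K>0$ such that $f(x,y)\le Kf(x,-y)$ for all $x,y\in\mathbb{R}$. *)

(* Defs.v *)
From Stdlib Require Import Reals Lra.
Open Scope R_scope.

(* |x|^a for real exponent a > 0, with the convention 0^a = 0
   (Stdlib's Rpower 0 a = exp (a * ln 0) = 1, so we special-case 0). *)
Definition abspow (x a : R) : R :=
  if Req_EM_T x 0 then 0 else Rpower (Rabs x) a.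

Definition sgn (x : R) : R :=
  if Rlt_dec 0 x then 1 else if Rlt_dec x 0 then -1 else 0.

Definition fp (p x y : R) : R :=
  abspow (x + y) p - abspow x p - y * p * abspow x (p - 1) * sgn x.

(* Main.v *)
Require Import Defs.
From Stdlib Require Import Reals Lra.
From Coquelicot Require Import Coquelicot.
Open Scope R_scope.

Definition psi (q u : R) : R := abspow u q * sgn u.

Lemma abspow_pos u a : 0 < u -> abspow u a = Rpower u a.
Proof. intro H. unfold abspow. destruct (Req_EM_T u 0); [lra|]. now rewrite Rabs_right by lra. Qed.
Lemma abspow_neg u a : u < 0 -> abspow u a = Rpower (- u) a.
Proof. intro H. unfold abspow. destruct (Req_EM_T u 0); [lra|]. now rewrite Rabs_left by lra. Qed.
Lemma abspow_0 a : abspow 0 a = 0.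
Proof. unfold abspow. destruct (Req_EM_T 0 0); lra. Qed.
Lemma sgn_pos u : 0 < u -> sgn u = 1.
Proof. intro H; unfold sgn; destruct (Rlt_dec 0 u); lra. Qed.
Lemma sgn_neg u : u < 0 -> sgn u = -1.
Proof. intro H; unfold sgn; destruct (Rlt_dec 0 u); [lra|]; destruct (Rlt_dec u 0); lra. Qed.
Lemma sgn_0 : sgn 0 = 0.
Proof. unfold sgn; destruct (Rlt_dec 0 0); [lra|]; destruct (Rlt_dec 0 0); lra. Qed.

Lemma psi_pos q u : 0 < u -> psi q u = Rpower u q.
Proof. intro H. unfold psi. rewrite abspow_pos, sgn_pos; lra. Qed.
Lemma psi_neg q u : u < 0 -> psi q u = - Rpower (- u) q.
Proof. intro H. unfold psi. rewrite abspow_neg, sgn_neg; lra. Qed.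
Lemma psi_0 q : psi q 0 = 0.
Proof. unfold psi. rewrite abspow_0; lra. Qed.
Lemma psi_opp q u : psi q (- u) = - psi q u.
Proof.
  destruct (Rtotal_order u 0) as [H|[H|H]].
  - rewrite psi_pos by lra. rewrite psi_neg by lra. lra.
  - subst. rewrite Ropp_0, psi_0. lra.
  - rewrite psi_neg by lra. rewrite psi_pos by lra. rewrite Ropp_involutive; lra.
Qed.

Lemma Rpower_pos x a : 0 < Rpower x a.
Proof. unfold Rpower. apply exp_pos. Qed.

Lemma psi_hom q a b : 0 < a -> psi q (a * b) = Rpower a q * psi q b.
Proof.
  intro Ha. destruct (Rtotal_order b 0) as [H|[H|H]].
  - rewrite !psi_neg by nra. replace (- (a*b)) with (a * (-b)) by ring.
    rewrite <- Rpower_mult_distr by lra. ring.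
  - subst. rewrite Rmult_0_r, psi_0. ring.
  - rewrite !psi_pos by nra. rewrite <- Rpower_mult_distr by lra. ring.
Qed.

Lemma Rpower_le_base x y r : 0 < x -> x <= y -> 0 <= r -> Rpower x r <= Rpower y r.
Proof.
  intros. unfold Rpower. destruct (Req_dec x y). subst; lra.
  destruct H1. left. apply exp_increasing. assert (ln x < ln y) by (apply ln_increasing; lra).
  nra. subst. rewrite !Rmult_0_l. lra.
Qed.

Lemma Rpower_le_exp x a b : 0 < x < 1 -> a <= b -> Rpower x b <= Rpower x a.
Proof.
  intros Hx Hab. unfold Rpower. assert (ln x < 0).
  { rewrite <- ln_1. apply ln_increasing; lra. }
  destruct Hab. left. apply exp_increasing. nra. subst; lra.
Qed.

Lemma pow_le1' (n : nat) b : 0 <= b <= 1 -> b ^ n <= 1.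
Proof. intro Hb. induction n; simpl. lra. assert (0 <= b ^ n) by (apply pow_le; lra). nra. Qed.

Lemma pow_bound (n : nat) b : 0 <= b <= 1 -> 1 - b ^ n <= INR n * (1 - b).
Proof.
  intro Hb. induction n.
  - simpl. lra.
  - rewrite S_INR. simpl.
    assert (0 <= b ^ n <= 1) by (split; [apply pow_le; lra | apply pow_le1'; lra]).
    nra.
Qed.

Lemma core_est q : 0 < q -> exists c0 C0, 0 < c0 /\ 0 < C0 /\
  forall b, -1 <= b <= 1 -> c0 * (1 - b) <= 1 - psi q b <= C0 * (1 - b).
Proof.
  intro Hq. destruct (INR_unbounded (Rmax 1 (Rmax q (/ q)))) as [n Hn].
  assert (H1 : 1 < INR n) by (pose proof (Rmax_l 1 (Rmax q (/q))); lra).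
  assert (H2 : q < INR n) by (pose proof (Rmax_r 1 (Rmax q (/q))); pose proof (Rmax_l q (/q)); lra).
  assert (H3 : / q < INR n) by (pose proof (Rmax_r 1 (Rmax q (/q))); pose proof (Rmax_r q (/q)); lra).
  assert (H4 : / INR n < q).
  { rewrite <- (Rinv_inv q). apply Rinv_lt_contravar; auto.
    assert (0 < / q) by (apply Rinv_0_lt_compat; lra). nra. }
  exists (/ (2 * INR n)), (2 * INR n). split. apply Rinv_0_lt_compat; lra. split. lra.
  intros b Hb.
  destruct (Rtotal_order b 0) as [Hn0|[Hn0|Hn0]].
  - rewrite psi_neg by lra.
    assert (Rpower (-b) q <= 1).
    { destruct (Req_dec b (-1)). subst. replace (- -1) with 1 by lra. unfold Rpower. rewrite ln_1, Rmult_0_r, exp_0. lra.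
      rewrite <- (Rpower_O (-b)) by lra. apply Rpower_le_exp; lra. }
    pose proof (Rpower_pos (-b) q).
    assert (/ (2 * INR n) <= / 2). { apply Rinv_le_contravar; lra. }
    split; nra.
  - subst. rewrite psi_0. assert (/ (2 * INR n) <= / 2). { apply Rinv_le_contravar; lra. } lra.
  - destruct (Req_dec b 1). subst. rewrite psi_pos by lra. unfold Rpower. rewrite ln_1, Rmult_0_r, exp_0. lra.
    rewrite psi_pos by lra.
    split.
    + set (c := Rpower b (/ INR n)).
      assert (Hc : c ^ n = b).
      { unfold c. rewrite <- Rpower_pow by apply Rpower_pos. rewrite Rpower_mult.
        rewrite Rinv_l by lra. apply Rpower_1; lra. }
      assert (Hc1 : Rpower b q <= c) by (apply Rpower_le_exp; lra).
      assert (0 < c) by apply Rpower_pos.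
      assert (c <= 1). { unfold c. rewrite <- (Rpower_O b) by lra. apply Rpower_le_exp; try lra.
        left; apply Rinv_0_lt_compat; lra. }
      pose proof (pow_bound n c ltac:(lra)) as Hpb. rewrite Hc in Hpb.
      assert (/ (2 * INR n) * (1 - b) <= (1 - c)).
      { apply Rmult_le_reg_l with (2 * INR n). lra. field_simplify; lra. }
      lra.
    + assert (Hc1 : b ^ n <= Rpower b q).
      { rewrite <- Rpower_pow by lra. apply Rpower_le_exp; lra. }
      pose proof (pow_bound n b ltac:(lra)). nra.
Qed.

Lemma psi_1 q : psi q 1 = 1.
Proof. rewrite psi_pos by lra. unfold Rpower. rewrite ln_1, Rmult_0_r. apply exp_0. Qed.

Lemma abs_le_b b a : Rabs b <= a -> -a <= b <= a.
Proof. intro H. destruct (Rcase_abs b); [rewrite Rabs_left in H|rewrite Rabs_right in H]; lra. Qed.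

Lemma E_est q : 0 < q -> exists c0 C0, 0 < c0 /\ 0 < C0 /\ forall a b, a <> b ->
  c0 * (a - b)^2 * Rpower (Rmax (Rabs a) (Rabs b)) (q - 1) <= (a - b) * (psi q a - psi q b)
  <= C0 * (a - b)^2 * Rpower (Rmax (Rabs a) (Rabs b)) (q - 1).
Proof.
  intro Hq. destruct (core_est q Hq) as (c0 & C0 & Hc0 & HC0 & Hcore).
  exists c0, C0. split; [lra|]. split; [lra|].
  assert (Hcase : forall a b, 0 < a -> Rabs b <= a ->
    c0 * (a - b)^2 * Rpower a (q - 1) <= (a - b) * (psi q a - psi q b)
    <= C0 * (a - b)^2 * Rpower a (q - 1)).
  { intros a b Ha Hb. set (be := b / a).
    assert (Eb : b = a * be) by (unfold be; field; lra).
    assert (Hbe : -1 <= be <= 1).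
    { apply abs_le_b in Hb. unfold be. split.
      - apply Rmult_le_reg_l with a; [lra|]. field_simplify; lra.
      - apply Rmult_le_reg_l with a; [lra|]. field_simplify; lra. }
    set (A := Rpower a (q - 1)).
    assert (HA : 0 < A) by apply Rpower_pos.
    assert (Eq : Rpower a q = A * a).
    { unfold A. replace q with ((q - 1) + 1) at 1 by ring. rewrite Rpower_plus, Rpower_1; lra. }
    assert (Epa : psi q a = A * a).
    { replace a with (a * 1) at 1 by ring. rewrite psi_hom, psi_1 by lra. lra. }
    assert (Epb : psi q b = A * a * psi q be).
    { rewrite Eb, psi_hom by lra. rewrite Eq. ring. }
    rewrite Epa, Epb, Eb.
    destruct (Hcore be Hbe) as [L U].
    assert (HX : 0 <= a * a * A * (1 - be)).
    { apply Rmult_le_pos; [|lra]. apply Rmult_le_pos; [nra|lra]. }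
    split.
    - replace (c0 * (a - a * be) ^ 2 * A) with ((a*a*A*(1-be)) * (c0 * (1 - be))) by ring.
      replace ((a - a * be) * (A * a - A * a * psi q be)) with ((a*a*A*(1-be)) * (1 - psi q be)) by ring.
      apply Rmult_le_compat_l; auto.
    - replace (C0 * (a - a * be) ^ 2 * A) with ((a*a*A*(1-be)) * (C0 * (1 - be))) by ring.
      replace ((a - a * be) * (A * a - A * a * psi q be)) with ((a*a*A*(1-be)) * (1 - psi q be)) by ring.
      apply Rmult_le_compat_l; auto. }
  intros a b Hab.
  destruct (Rle_dec (Rabs b) (Rabs a)) as [Hle|Hlt].
  - rewrite Rmax_left by lra.
    destruct (Rtotal_order a 0) as [Ha|[Ha|Ha]].
    + pose proof (Hcase (-a) (-b) ltac:(lra) ltac:(rewrite Rabs_Ropp; rewrite (Rabs_left a) in Hle; lra)) as H.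
      rewrite !psi_opp in H. rewrite Rabs_left by lra.
      replace (- a - - b) with (- (a - b)) in H by ring.
      replace ((a - b) ^ 2) with ((- (a - b)) ^ 2) by ring.
      replace ((a - b) * (psi q a - psi q b)) with (- (a - b) * (- psi q a - - psi q b)) by ring. exact H.
    + subst. rewrite Rabs_R0 in Hle. pose proof (Rabs_pos b).
      apply abs_le_b in Hle. lra.
    + rewrite Rabs_right by lra. apply Hcase; rewrite (Rabs_right a) in Hle; lra.
  - rewrite Rmax_right by lra.
    replace ((a - b)^2) with ((b - a)^2) by ring.
    replace ((a - b) * (psi q a - psi q b)) with ((b - a) * (psi q b - psi q a)) by ring.
    destruct (Rtotal_order b 0) as [Hb|[Hb|Hb]].
    + pose proof (Hcase (-b) (-a) ltac:(lra) ltac:(rewrite Rabs_Ropp; rewrite (Rabs_left b) in Hlt; lra)) as H.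
      rewrite !psi_opp in H. rewrite Rabs_left by lra.
      replace (- b - - a) with (- (b - a)) in H by ring.
      replace ((b - a) ^ 2) with ((- (b - a)) ^ 2) by ring.
      replace ((b - a) * (psi q b - psi q a)) with (- (b - a) * (- psi q b - - psi q a)) by ring. exact H.
    + subst. rewrite Rabs_R0 in Hlt. pose proof (Rabs_pos a). lra.
    + rewrite Rabs_right by lra. apply Hcase; rewrite (Rabs_right b) in Hlt; lra.
Qed.

Lemma is_derive_eq (f : R -> R) (x l l' : R) : is_derive f x l -> l = l' -> is_derive f x l'.
Proof. intros H ->. exact H. Qed.

Lemma ball_R (u e t : R) (He : 0 < e) : ball u e t -> Rabs (t - u) < e.
Proof. intro H. exact H. Qed.

Lemma deriv_abspow p (hp : 1 < p) u : is_derive (fun t => abspow t p) u (p * psi (p - 1) u).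
Proof.
  destruct (Rtotal_order u 0) as [Hu|[Hu|Hu]].
  - apply is_derive_ext_loc with (f := fun t => Rpower (- t) p).
    + exists (mkposreal (- u) ltac:(lra)). intros t Ht. apply ball_R in Ht; [|simpl; lra]. simpl in Ht.
      rewrite abspow_neg; auto.
      destruct (Rcase_abs (t - u)); [rewrite Rabs_left in Ht|rewrite Rabs_right in Ht]; lra.
    + eapply is_derive_eq.
      * apply (is_derive_comp (fun t => Rpower t p) (fun t => - t)).
        -- apply is_derive_Reals. apply derivable_pt_lim_power. lra.
        -- instantiate (1 := -1). auto_derive; auto; ring.
      * rewrite psi_neg by lra. simpl. unfold scal, opp, one; simpl. unfold mult; simpl. ring.
  - subst. rewrite psi_0, Rmult_0_r. apply is_derive_Reals. intros e He.
    assert (Hd : 0 < Rpower e (/ (p - 1))) by apply Rpower_pos.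
    exists (mkposreal _ Hd). intros h Hh0 Hh. simpl in Hh.
    rewrite Rplus_0_l, abspow_0, Rminus_0_r, Rminus_0_r.
    unfold abspow. destruct (Req_EM_T h 0); [lra|].
    rewrite Rabs_div by auto. rewrite Rabs_right by (left; apply Rpower_pos).
    replace (Rpower (Rabs h) p / Rabs h) with (Rpower (Rabs h) (p - 1)).
    2:{ replace p with ((p - 1) + 1) at 2 by ring. rewrite Rpower_plus, Rpower_1 by (apply Rabs_pos_lt; auto).
        field. apply Rabs_no_R0; auto. }
    assert (Rabs h > 0) by (apply Rabs_pos_lt; auto).
    unfold Rpower in *. rewrite <- (exp_ln e) by lra. apply exp_increasing.
    assert (ln (Rabs h) < ln (exp (/ (p - 1) * ln e))) by (apply ln_increasing; lra).
    rewrite ln_exp in H0.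
    apply Rmult_lt_compat_l with (r := p - 1) in H0; [|lra].
    replace ((p - 1) * (/ (p - 1) * ln e)) with (ln e) in H0 by (field; lra). lra.
  - apply is_derive_ext_loc with (f := fun t => Rpower t p).
    + exists (mkposreal u ltac:(lra)). intros t Ht. apply ball_R in Ht; [|simpl; lra]. simpl in Ht.
      rewrite abspow_pos; auto.
      destruct (Rcase_abs (t - u)); [rewrite Rabs_left in Ht|rewrite Rabs_right in Ht]; lra.
    + eapply is_derive_eq.
      * apply is_derive_Reals. apply derivable_pt_lim_power. lra.
      * rewrite psi_pos by lra. reflexivity.
Qed.

Lemma lin_der (a b y : R) : is_derive (fun y => a + y * b) y b.
Proof. auto_derive; auto. ring. Qed.
Lemma shift_der (x y : R) : is_derive (fun y => x + y) y 1.
Proof. auto_derive; auto. Qed.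
Lemma minus_der (f g : R -> R) y df dg : is_derive f y df -> is_derive g y dg ->
  is_derive (fun y => f y - g y) y (df - dg).
Proof. intros. exact (is_derive_minus f g y df dg H H0). Qed.
Lemma comp_der (f g : R -> R) y df dg : is_derive f (g y) df -> is_derive g y dg ->
  is_derive (fun y => f (g y)) y (dg * df).
Proof. intros. exact (is_derive_comp f g y df dg H H0). Qed.
Lemma scal_der (f : R -> R) y k df : is_derive f y df -> is_derive (fun y => k * f y) y (k * df).
Proof. apply is_derive_scal. Qed.

Lemma ext_der (f g : R -> R) y l : (forall t : R, f t = g t) -> is_derive f y l -> is_derive g y l.
Proof. intros. now apply (is_derive_ext f g). Qed.

Lemma deriv_fp p (hp : 1 < p) x y :
  is_derive (fun y => fp p x y) y (p * (psi (p - 1) (x + y) - psi (p - 1) x)).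
Proof.
  apply ext_der with (f := fun y => abspow (x + y) p - (abspow x p + y * (p * abspow x (p - 1) * sgn x))).
  { intro t. unfold fp. ring. }
  eapply is_derive_eq.
  - apply minus_der.
    + apply (comp_der (fun t => abspow t p) (fun y => x + y)).
      * apply deriv_abspow; auto.
      * apply shift_der.
    + apply lin_der.
  - unfold psi. ring.
Qed.

Lemma sign_aux (c d t : R) : 0 <= c * d -> c <> 0 -> (c < 0 /\ t <= 0 \/ 0 < c /\ 0 <= t) -> 0 <= d * t.
Proof. intros. destruct H1 as [[]|[]]; nra. Qed.

Lemma mvt_nonneg (H dH : R -> R) : (forall y, is_derive H y (dH y)) -> H 0 = 0 -> dH 0 = 0 ->
  (forall s, 0 <= s * dH s) -> forall t, 0 <= H t.
Proof.
  intros Hd H0 dH0 Hs t.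
  destruct (MVT_gen H 0 t dH) as (c & Hc & Ec).
  - intros; apply Hd.
  - intros z _. apply continuity_pt_filterlim. apply (ex_derive_continuous H z).
    exists (dH z). apply Hd.
  - rewrite H0, Rminus_0_r in Ec. rewrite Ec.
    destruct (Req_dec c 0) as [E|E]. { subst. rewrite dH0. lra. }
    apply (sign_aux c); auto.
    destruct (Rtotal_order t 0) as [Ht|[Ht|Ht]].
    + rewrite Rmin_right, Rmax_left in Hc by lra. lra.
    + subst. rewrite Rmin_left, Rmax_left in Hc by lra. lra.
    + rewrite Rmin_left, Rmax_right in Hc by lra. lra.
Qed.

Lemma cmp_pow M M' r : 0 < M -> 0 < M' -> M <= 5 * M' -> M' <= 5 * M ->
  Rpower M r <= Rpower 5 (Rabs r) * Rpower M' r.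
Proof.
  intros. unfold Rpower. rewrite <- exp_plus.
  assert (ln M <= ln 5 + ln M').
  { rewrite <- ln_mult by lra. apply ln_le; lra. }
  assert (ln M' <= ln 5 + ln M).
  { rewrite <- ln_mult by lra. apply ln_le; lra. }
  assert (r * ln M <= Rabs r * ln 5 + r * ln M').
  { destruct (Rcase_abs r). rewrite Rabs_left by lra. nra. rewrite Rabs_right by lra. nra. }
  destruct (Req_dec (r * ln M) (Rabs r * ln 5 + r * ln M')) as [E|E]. rewrite E; lra.
  left. apply exp_increasing. lra.
Qed.

Lemma abs_cases a : (Rabs a = a /\ 0 <= a) \/ (Rabs a = - a /\ a < 0).
Proof. destruct (Rcase_abs a); [right; rewrite Rabs_left|left; rewrite Rabs_right]; lra. Qed.

Lemma max_cases a b : (Rmax a b = a /\ b <= a) \/ (Rmax a b = b /\ a <= b).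
Proof. unfold Rmax. destruct (Rle_dec a b); lra. Qed.

Lemma mx_a x y : y <> 0 ->
  0 < Rmax (Rabs (x + y)) (Rabs x) /\ 0 < Rmax (Rabs (x + 2 * y)) (Rabs (x + y)) /\
  Rmax (Rabs (x + y)) (Rabs x) <= 5 * Rmax (Rabs (x + 2 * y)) (Rabs (x + y)) /\
  Rmax (Rabs (x + 2 * y)) (Rabs (x + y)) <= 5 * Rmax (Rabs (x + y)) (Rabs x).
Proof.
  intro Hy. destruct (Rtotal_order y 0) as [Hy'|[Hy'|Hy']]; [|lra|];
  destruct (abs_cases x) as [[]|[]]; destruct (abs_cases (x+y)) as [[]|[]];
  destruct (abs_cases (x+2*y)) as [[]|[]];
  destruct (max_cases (Rabs (x + y)) (Rabs x)) as [[]|[]];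
  destruct (max_cases (Rabs (x + 2*y)) (Rabs (x + y))) as [[]|[]];
  repeat split; lra.
Qed.

Lemma mx_b x y : y <> 0 ->
  0 < Rmax (Rabs (x + y)) (Rabs x) /\ 0 < Rmax (Rabs (x + 2 * y)) (Rabs x) /\
  Rmax (Rabs (x + 2 * y)) (Rabs x) <= 5 * Rmax (Rabs (x + y)) (Rabs x) /\
  Rmax (Rabs (x + y)) (Rabs x) <= 5 * Rmax (Rabs (x + 2 * y)) (Rabs x).
Proof.
  intro Hy. destruct (Rtotal_order y 0) as [Hy'|[Hy'|Hy']]; [|lra|];
  destruct (abs_cases x) as [[]|[]]; destruct (abs_cases (x+y)) as [[]|[]];
  destruct (abs_cases (x+2*y)) as [[]|[]];
  destruct (max_cases (Rabs (x + y)) (Rabs x)) as [[]|[]];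
  destruct (max_cases (Rabs (x + 2*y)) (Rabs x)) as [[]|[]];
  repeat split; lra.
Qed.

Lemma mx_c x y : y <> 0 ->
  0 < Rmax (Rabs (x + y)) (Rabs x) /\ 0 < Rmax (Rabs (x + - y)) (Rabs x) /\
  Rmax (Rabs (x + y)) (Rabs x) <= 5 * Rmax (Rabs (x + - y)) (Rabs x) /\
  Rmax (Rabs (x + - y)) (Rabs x) <= 5 * Rmax (Rabs (x + y)) (Rabs x).
Proof.
  intro Hy. destruct (Rtotal_order y 0) as [Hy'|[Hy'|Hy']]; [|lra|];
  destruct (abs_cases x) as [[]|[]]; destruct (abs_cases (x+y)) as [[]|[]];
  destruct (abs_cases (x+ - y)) as [[]|[]];
  destruct (max_cases (Rabs (x + y)) (Rabs x)) as [[]|[]];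
  destruct (max_cases (Rabs (x + - y)) (Rabs x)) as [[]|[]];
  repeat split; lra.
Qed.

Definition HEprop q c0 C0 := forall a b, a <> b ->
  c0 * (a - b)^2 * Rpower (Rmax (Rabs a) (Rabs b)) (q - 1) <= (a - b) * (psi q a - psi q b)
  <= C0 * (a - b)^2 * Rpower (Rmax (Rabs a) (Rabs b)) (q - 1).

Lemma pw_a q c0 C0 p x y : 0 < c0 -> 0 < C0 -> 0 < p -> HEprop q c0 C0 ->
  0 <= y * (2 * (p * (psi q (x + 2 * y) - psi q x))
            - (2 + 2 * c0 / (C0 * Rpower 5 (Rabs (q - 1)))) * (p * (psi q (x + y) - psi q x))).
Proof.
  intros Hc0 HC0 Hp HE. set (L := Rpower 5 (Rabs (q - 1))).
  assert (HL : 0 < L) by apply Rpower_pos.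
  destruct (Req_dec y 0) as [Hy|Hy]. { subst. lra. }
  destruct (mx_a x y Hy) as (P2 & P1 & Q21 & Q12).
  set (M1 := Rmax (Rabs (x + 2 * y)) (Rabs (x + y))) in *.
  set (M2 := Rmax (Rabs (x + y)) (Rabs x)) in *.
  assert (HR : Rpower M2 (q - 1) <= L * Rpower M1 (q - 1)) by (apply cmp_pow; lra).
  destruct (HE (x + 2 * y) (x + y) ltac:(lra)) as [H1 _].
  destruct (HE (x + y) x ltac:(lra)) as [_ H2].
  fold M1 in H1. fold M2 in H2.
  replace (x + 2 * y - (x + y)) with y in H1 by ring.
  replace (x + y - x) with y in H2 by ring.
  set (R1 := Rpower M1 (q - 1)) in *. set (R2 := Rpower M2 (q - 1)) in *.
  set (A := psi q (x + 2 * y)) in *. set (B := psi q (x + y)) in *. set (X := psi q x) in *.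
  set (k := 2 * c0 / (C0 * L)).
  assert (Hk : 0 < k) by (unfold k; apply Rdiv_lt_0_compat; nra).
  assert (HY : 0 <= y ^ 2) by nra.
  assert (S1 : k * (y * (B - X)) <= k * (C0 * y ^ 2 * R2)) by (apply Rmult_le_compat_l; lra).
  assert (S2 : k * (C0 * y ^ 2 * R2) <= k * (C0 * y ^ 2 * (L * R1))).
  { apply Rmult_le_compat_l; [lra|]. apply Rmult_le_compat_l; [nra|lra]. }
  assert (S3 : k * (C0 * y ^ 2 * (L * R1)) = 2 * (c0 * y ^ 2 * R1)).
  { unfold k. field. split; lra. }
  assert (S4 : 0 <= 2 * (y * (A - B)) - k * (y * (B - X))).
  { replace (y * (A - B)) with ((x + 2 * y - (x + y)) * (A - B)) by ring. lra. }
  replace (y * (2 * (p * (A - X)) - (2 + k) * (p * (B - X))))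
    with (p * (2 * (y * (A - B)) - k * (y * (B - X)))) by ring.
  apply Rmult_le_pos; lra.
Qed.

Lemma pw_b q c0 C0 p x y : 0 < c0 -> 0 < C0 -> 0 < p -> HEprop q c0 C0 ->
  0 <= y * ((4 * C0 * Rpower 5 (Rabs (q - 1)) / c0) * (p * (psi q (x + y) - psi q x))
            - 2 * (p * (psi q (x + 2 * y) - psi q x))).
Proof.
  intros Hc0 HC0 Hp HE. set (L := Rpower 5 (Rabs (q - 1))).
  assert (HL : 0 < L) by apply Rpower_pos.
  destruct (Req_dec y 0) as [Hy|Hy]. { subst. lra. }
  destruct (mx_b x y Hy) as (P2 & P3 & Q32 & Q23).
  set (M3 := Rmax (Rabs (x + 2 * y)) (Rabs x)) in *.
  set (M2 := Rmax (Rabs (x + y)) (Rabs x)) in *.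
  assert (HR : Rpower M3 (q - 1) <= L * Rpower M2 (q - 1)) by (apply cmp_pow; lra).
  destruct (HE (x + 2 * y) x ltac:(lra)) as [_ H3].
  destruct (HE (x + y) x ltac:(lra)) as [H2 _].
  fold M3 in H3. fold M2 in H2.
  replace (x + 2 * y - x) with (2 * y) in H3 by ring.
  replace (x + y - x) with y in H2 by ring.
  set (R3 := Rpower M3 (q - 1)) in *. set (R2 := Rpower M2 (q - 1)) in *.
  set (A := psi q (x + 2 * y)) in *. set (B := psi q (x + y)) in *. set (X := psi q x) in *.
  set (T := 4 * C0 * L / c0).
  assert (HT : 0 < T) by (unfold T; apply Rdiv_lt_0_compat; nra).
  assert (HY : 0 <= y ^ 2) by nra.
  assert (S1 : C0 * (2 * y) ^ 2 * R3 <= C0 * (2 * y) ^ 2 * (L * R2)).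
  { apply Rmult_le_compat_l; [nra|lra]. }
  assert (S2 : C0 * (2 * y) ^ 2 * (L * R2) = T * (c0 * y ^ 2 * R2)).
  { unfold T. field. lra. }
  assert (S3 : T * (c0 * y ^ 2 * R2) <= T * (y * (B - X))) by (apply Rmult_le_compat_l; lra).
  replace (y * (T * (p * (B - X)) - 2 * (p * (A - X))))
    with (p * (T * (y * (B - X)) - (2 * y) * (A - X))) by ring.
  apply Rmult_le_pos; lra.
Qed.

Lemma pw_c q c0 C0 p x y : 0 < c0 -> 0 < C0 -> 0 < p -> HEprop q c0 C0 ->
  0 <= y * ((C0 * Rpower 5 (Rabs (q - 1)) / c0) * (-1 * (p * (psi q (x + - y) - psi q x)))
            - p * (psi q (x + y) - psi q x)).
Proof.
  intros Hc0 HC0 Hp HE. set (L := Rpower 5 (Rabs (q - 1))).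
  assert (HL : 0 < L) by apply Rpower_pos.
  destruct (Req_dec y 0) as [Hy|Hy]. { subst. lra. }
  destruct (mx_c x y Hy) as (P2 & P4 & Q24 & Q42).
  set (M4 := Rmax (Rabs (x + - y)) (Rabs x)) in *.
  set (M2 := Rmax (Rabs (x + y)) (Rabs x)) in *.
  assert (HR : Rpower M2 (q - 1) <= L * Rpower M4 (q - 1)) by (apply cmp_pow; lra).
  destruct (HE (x + - y) x ltac:(lra)) as [H4 _].
  destruct (HE (x + y) x ltac:(lra)) as [_ H2].
  fold M4 in H4. fold M2 in H2.
  replace (x + - y - x) with (- y) in H4 by ring.
  replace ((- y) ^ 2) with (y ^ 2) in H4 by ring.
  replace (x + y - x) with y in H2 by ring.
  set (R4 := Rpower M4 (q - 1)) in *. set (R2 := Rpower M2 (q - 1)) in *.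
  set (Z := psi q (x + - y)) in *. set (B := psi q (x + y)) in *. set (X := psi q x) in *.
  set (K := C0 * L / c0).
  assert (HK : 0 < K) by (unfold K; apply Rdiv_lt_0_compat; nra).
  assert (HY : 0 <= y ^ 2) by nra.
  assert (S1 : C0 * y ^ 2 * R2 <= C0 * y ^ 2 * (L * R4)).
  { apply Rmult_le_compat_l; [nra|lra]. }
  assert (S2 : C0 * y ^ 2 * (L * R4) = K * (c0 * y ^ 2 * R4)).
  { unfold K. field. lra. }
  assert (S3 : K * (c0 * y ^ 2 * R4) <= K * (- y * (Z - X))) by (apply Rmult_le_compat_l; lra).
  replace (y * (K * (-1 * (p * (Z - X))) - p * (B - X)))
    with (p * (K * (- y * (Z - X)) - y * (B - X))) by ring.
  apply Rmult_le_pos; lra.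
Qed.

Lemma fp0 p x : fp p x 0 = 0.
Proof. unfold fp. rewrite Rplus_0_r. ring. Qed.

Lemma dbl_der y : is_derive (fun y : R => 2 * y) y 2.
Proof. auto_derive; auto. ring. Qed.
Lemma neg_der y : is_derive (fun y : R => - y) y (-1).
Proof. auto_derive; auto. Qed.

Theorem lemma6p8 (p : R) (hp1 : 1 < p) :
  (exists Lam : R, 2 < Lam /\ forall x y : R, fp p x (2 * y) >= Lam * fp p x y) /\
  (exists T : R, 0 < T /\ forall x y : R, fp p x (2 * y) <= T * fp p x y) /\
  (exists K : R, 0 < K /\ forall x y : R, fp p x y <= K * fp p x (- y)).
Proof.
  destruct (E_est (p - 1) ltac:(lra)) as (c0 & C0 & Hc0 & HC0 & HE).
  assert (HE' : HEprop (p - 1) c0 C0) by exact HE.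
  set (L := Rpower 5 (Rabs (p - 1 - 1))).
  assert (HL : 0 < L) by apply Rpower_pos.
  split; [|split].
  - exists (2 + 2 * c0 / (C0 * L)). split.
    { assert (0 < 2 * c0 / (C0 * L)) by (apply Rdiv_lt_0_compat; nra). lra. }
    intros x y.
    set (Lam := 2 + 2 * c0 / (C0 * L)).
    assert (Hn := mvt_nonneg (fun y => fp p x (2 * y) - Lam * fp p x y)
      (fun y => 2 * (p * (psi (p - 1) (x + 2 * y) - psi (p - 1) x))
               - Lam * (p * (psi (p - 1) (x + y) - psi (p - 1) x)))).
    cbv beta in Hn. enough (0 <= fp p x (2 * y) - Lam * fp p x y) by lra.
    apply Hn.
    + intro t. apply minus_der.
      * apply (comp_der (fun u => fp p x u) (fun y => 2 * y)).
        -- apply deriv_fp; auto.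
        -- apply dbl_der.
      * apply scal_der. apply deriv_fp; auto.
    + rewrite Rmult_0_r, fp0. ring.
    + rewrite Rmult_0_r, !Rplus_0_r. ring.
    + intro s. apply pw_a; auto; lra.
  - exists (4 * C0 * L / c0). split.
    { apply Rdiv_lt_0_compat; nra. }
    intros x y.
    set (T := 4 * C0 * L / c0).
    assert (Hn := mvt_nonneg (fun y => T * fp p x y - fp p x (2 * y))
      (fun y => T * (p * (psi (p - 1) (x + y) - psi (p - 1) x))
               - 2 * (p * (psi (p - 1) (x + 2 * y) - psi (p - 1) x)))).
    cbv beta in Hn. enough (0 <= T * fp p x y - fp p x (2 * y)) by lra.
    apply Hn.
    + intro t. apply minus_der.
      * apply scal_der. apply deriv_fp; auto.
      * apply (comp_der (fun u => fp p x u) (fun y => 2 * y)).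
        -- apply deriv_fp; auto.
        -- apply dbl_der.
    + rewrite Rmult_0_r, fp0. ring.
    + rewrite Rmult_0_r, !Rplus_0_r. ring.
    + intro s. apply pw_b; auto; lra.
  - exists (C0 * L / c0). split.
    { apply Rdiv_lt_0_compat; nra. }
    intros x y.
    set (K := C0 * L / c0).
    assert (Hn := mvt_nonneg (fun y => K * fp p x (- y) - fp p x y)
      (fun y => K * (-1 * (p * (psi (p - 1) (x + - y) - psi (p - 1) x)))
               - p * (psi (p - 1) (x + y) - psi (p - 1) x))).
    cbv beta in Hn. enough (0 <= K * fp p x (- y) - fp p x y) by lra.
    apply Hn.
    + intro t. apply minus_der.
      * apply scal_der. apply (comp_der (fun u => fp p x u) (fun y => - y)).
        -- apply deriv_fp; auto.
        -- apply neg_der.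
      * apply deriv_fp; auto.
    + rewrite Ropp_0, fp0. ring.
    + rewrite Ropp_0, !Rplus_0_r. ring.
    + intro s. apply pw_c; auto; lra.
Qed.
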